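(* For $n\ge1$ let $S_n$ be the set of binary sequences of length $n$ in which no maximal run of zeros has length congruent to $1 \bmod 3$. Classify each $\mathbf v\in S_n$ into one of five types: type A if $\mathbf v$ ends in a maximal run of $m>0$ zeros with $m\equiv 0\pmod 3$; type B if it ends in a maximal run of $m>0$ zeros with $m\equiv 2\pmod 3$; type C if $\mathbf v$ ends in $1$ and either $\mathbf v=1$ or the final $1$ is immediately preceded by a maximal run of $m>0$ zeros with $m\equiv0\pmod 3$; type D if the final $1$ is immediately preceded by a maximal run of $m>0$ zeros with $m\equiv 2\pmod 3$; type E if $\mathbf v$ ends in $11$. Define $f_n:S_n\to\mathcal P(S_{n+1})$ by: if $\mathbf v$ has type A, $f_n(\mathbf v)=\{\mathbf v1\}$; if type B, $f_n(\mathbf v)=\{\mathbf v0,\mathbf v1\}$; if type C or E, writing $\mathbf v=\mathbf u1$, $f_n(\mathbf v)=\{\mathbf v1,\mathbf u00\}$; if type D, $f_n(\mathbf v)=\{\mathbf v1\}$. Then the sets $f_n(\mathbf v)$, $\mathbf v\in S_n$, are pairwise disjoint and $$S_{n+1}=\bigcup_{\mathbf v\in S_n}f_n(\mathbf v),\qquad |S_{n+1}|=\sum_{\mathbf v\in S_n}|f_n(\mathbf v)|.$$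
   Context: A ''run of zeros'' means a maximal block of consecutive zeros; e.g. $00000\in S_5$. $\mathcal P(X)$ denotes the power set of $X$. *)

(* Defs.v *)
(* Binary sequences: bool with false = 0, true = 1. *)
From mathcomp Require Import all_boot.
Set Implicit Arguments. Unset Strict Implicit. Unset Printing Implicit Defensive.

(* zruns cur s : lengths (in order) of the maximal runs of zeros of s,
   where cur zeros have already been read just before s. *)
Fixpoint zruns (cur : nat) (s : seq bool) : seq nat :=
  match s with
  | [::] => if 0 < cur then [:: cur] else [::]
  | true :: t => (if 0 < cur then [:: cur] else [::]) ++ zruns 0 t
  | false :: t => zruns cur.+1 t
  end.

Definition zero_runs (s : seq bool) : seq nat := zruns 0 s.

Definition goodseq (s : seq bool) : bool :=
  all (fun m => m %% 3 != 1) (zero_runs s).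

Definition Sset (n : nat) : {set n.-tuple bool} := [set t : n.-tuple bool | goodseq t].

(* length of the trailing (maximal) run of zeros; 0 if s ends in 1 or is empty *)
Definition trailing_zeros (s : seq bool) : nat := find id (rev s).

Definition init (s : seq bool) : seq bool := take (size s).-1 s.

Definition typeA (v : seq bool) : bool :=
  (0 < trailing_zeros v) && (trailing_zeros v %% 3 == 0).
Definition typeB (v : seq bool) : bool :=
  (0 < trailing_zeros v) && (trailing_zeros v %% 3 == 2).
Definition typeC (v : seq bool) : bool :=
  (v == [:: true]) ||
  [&& (0 < size v), last false v,
      0 < trailing_zeros (init v) & trailing_zeros (init v) %% 3 == 0].
Definition typeD (v : seq bool) : bool :=
  [&& (0 < size v), last false v,
      0 < trailing_zeros (init v) & trailing_zeros (init v) %% 3 == 2].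
Definition typeE (v : seq bool) : bool :=
  (1 < size v) && (drop (size v - 2) v == [:: true; true]).

Definition f_seq (v : seq bool) : seq (seq bool) :=
  if typeA v then [:: rcons v true]
  else if typeB v then [:: rcons v false; rcons v true]
  else if typeC v || typeE v then [:: rcons v true; init v ++ [:: false; false]]
  else if typeD v then [:: rcons v true]
  else [::].

Definition f (n : nat) (v : n.-tuple bool) : {set n.+1.-tuple bool} :=
  [set t : n.+1.-tuple bool | val t \in f_seq v].

(* Main.v *)
Require Import Defs.
From mathcomp Require Import all_boot.

Definition tz := trailing_zeros.
Definition strip (s : seq bool) := rev (drop (trailing_zeros s) (rev s)).

Lemma tz_nil : trailing_zeros [::] = 0. Proof. by []. Qed.
Lemma tz_T s : trailing_zeros (rcons s true) = 0.
Proof. by rewrite /trailing_zeros rev_rcons. Qed.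
Lemma tz_F s : trailing_zeros (rcons s false) = (trailing_zeros s).+1.
Proof. by rewrite /trailing_zeros rev_rcons. Qed.
Lemma strip_T s : strip (rcons s true) = rcons s true.
Proof. by rewrite /strip tz_T drop0 revK. Qed.
Lemma strip_F s : strip (rcons s false) = strip s.
Proof. by rewrite /strip tz_F rev_rcons. Qed.

Lemma strip_dec s : s = strip s ++ nseq (trailing_zeros s) false.
Proof.
elim/last_ind: s => [//|s [] IH]; first by rewrite strip_T tz_T cats0.
rewrite strip_F tz_F {1}IH -cats1 -catA; congr (_ ++ _).
by elim: (trailing_zeros s) => //= k ->.
Qed.

Lemma strip_shape s : strip s = [::] \/ exists r, strip s = rcons r true.
Proof.
elim/last_ind: s => [|s [] IH]; first by left.
- by right; exists s; rewrite strip_T.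
- by rewrite strip_F.
Qed.

Lemma zruns_nseq c k t : zruns c (nseq k false ++ t) = zruns (c + k) t.
Proof. by elim: k c => [|k IH] c /=; rewrite ?addn0 // IH addnS. Qed.

Lemma zruns_T c q t : zruns c (q ++ true :: t) = zruns c q ++ zruns 0 t.
Proof.
elim: q c => [|[] q IH] c /=; first by [].
- by rewrite IH catA.
- by rewrite IH.
Qed.

Lemma good_T s : goodseq (rcons s true) = goodseq s.
Proof. by rewrite /goodseq /zero_runs -cats1 zruns_T /= cats0. Qed.

Lemma good_dec s : goodseq s = goodseq (strip s) && (trailing_zeros s %% 3 != 1).
Proof.
rewrite {1}(strip_dec s) /goodseq /zero_runs.
case: (strip_shape s) => [->|[r ->]].
- rewrite /= -(cats0 (nseq _ _)) zruns_nseq /=.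
  by rewrite add0n; case: (trailing_zeros s) => [|k] //=; rewrite andbT.
- rewrite -!cats1 -catA zruns_T [zruns 0 (r ++ _)]zruns_T /= cats0 -(cats0 (nseq _ _)) zruns_nseq /=.
  rewrite all_cat add0n; case: (trailing_zeros s) => [|k] //=; rewrite ?andbT //.
Qed.

Lemma good_F s : goodseq (rcons s false) =
  goodseq (strip s) && ((trailing_zeros s).+1 %% 3 != 1).
Proof. by rewrite good_dec strip_F tz_F. Qed.
Lemma init_rcons s x : init (rcons s x) = s.
Proof. by rewrite /init size_rcons -cats1 take_size_cat. Qed.

Lemma typeE_T s : typeE (rcons s true) = (0 < size s) && last false s.
Proof.
case/lastP: s => [//|s a].
rewrite /typeE !size_rcons last_rcons /= -!cats1 -catA /=.
have -> : (size s).+2 - 2 = size s by rewrite subn2.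
by rewrite drop_size_cat //; case: a.
Qed.

Lemma typeE_F s : typeE (rcons s false) = false.
Proof.
case/lastP: s => [//|s a].
rewrite /typeE !size_rcons -!cats1 -catA /=.
have -> : (size s).+2 - 2 = size s by rewrite subn2.
by rewrite drop_size_cat //; case: a.
Qed.

Lemma f_seq_F s : f_seq (rcons s false) =
  if (trailing_zeros s).+1 %% 3 == 0 then [:: rcons (rcons s false) true]
  else if (trailing_zeros s).+1 %% 3 == 2 then
    [:: rcons (rcons s false) false; rcons (rcons s false) true]
  else [::].
Proof.
rewrite /f_seq /typeA /typeB tz_F /= typeE_F orbF.
have -> : typeC (rcons s false) = false.
  rewrite /typeC last_rcons /= andbF orbF.
  by apply/eqP => /(congr1 (last false)); rewrite last_rcons.
have -> : typeD (rcons s false) = false by rewrite /typeD last_rcons /= andbF.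
by case: ifP => //; case: ifP.
Qed.

Lemma f_seq_T s : f_seq (rcons s true) =
  if (s == [::]) || [&& 0 < trailing_zeros s & trailing_zeros s %% 3 == 0]
     || ((0 < size s) && last false s)
  then [:: rcons (rcons s true) true; s ++ [:: false; false]]
  else if (0 < trailing_zeros s) && (trailing_zeros s %% 3 == 2) then [:: rcons (rcons s true) true]
  else [::].
Proof.
rewrite /f_seq /typeA /typeB tz_T /= typeE_T /typeC /typeD last_rcons init_rcons size_rcons /=.
have -> : (rcons s true == [:: true]) = (s == [::]).
  by case: s => [|a [|b s]] //; rewrite !eqseq_cons /= ?andbF.
by [].
Qed.
From mathcomp Require Import zify.
Definition g (w : seq bool) :=
  if last false w then init w
  else if trailing_zeros w %% 3 == 0 then init w
  else rcons (init (init w)) true.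

Lemma g_T s : g (rcons s true) = s.
Proof. by rewrite /g last_rcons init_rcons. Qed.

Lemma g_F s : g (rcons s false) =
  if (trailing_zeros s).+1 %% 3 == 0 then s else rcons (init s) true.
Proof. by rewrite /g last_rcons tz_F init_rcons. Qed.

Lemma good_strip s : goodseq s -> goodseq (strip s).
Proof. by rewrite good_dec => /andP[]. Qed.

Lemma good_tz s : goodseq s -> trailing_zeros s %% 3 != 1.
Proof. by rewrite good_dec => /andP[]. Qed.

Lemma fs_T v : goodseq v ->
  [&& goodseq (rcons v true), size (rcons v true) == (size v).+1 & g (rcons v true) == v].
Proof. by move=> Hv; rewrite good_T Hv size_rcons g_T !eqxx. Qed.

Lemma fseq_good v w : goodseq v -> w \in f_seq v ->
  [&& goodseq w, size w == (size v).+1 & g w == v].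
Proof.
case/lastP: v => [//|s []] Hv.
- rewrite f_seq_T; case: ifP => HC.
    rewrite !inE => /orP[/eqP->|/eqP->]; first exact: fs_T.
    have H0 : trailing_zeros s %% 3 == 0.
      case/orP: HC => [/orP[/eqP->//|/andP[_ ->]//]|].
      by case/lastP: s {Hv} => [//|s a]; rewrite size_rcons last_rcons /= => ->; rewrite tz_T.
    have -> : s ++ [:: false; false] = rcons (rcons s false) false by rewrite -!cats1 -catA.
    have Hs : goodseq s by rewrite -good_T.
    rewrite good_F strip_F (good_strip _ Hs) !tz_F g_F !tz_F init_rcons.
    rewrite !size_rcons eqxx /=.
    have -> : (trailing_zeros s).+2 %% 3 == 1 = false by lia.
    have -> : (trailing_zeros s).+2 %% 3 == 0 = false by lia.
    by rewrite eqxx.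
  case: ifP => HD //.
  by rewrite !inE => /eqP->; apply: fs_T.
- rewrite f_seq_F; case: ifP => H0.
    by rewrite !inE => /eqP->; apply: fs_T.
  case: ifP => H2 //.
  rewrite !inE => /orP[/eqP->|/eqP->]; last exact: fs_T.
  have Hs : goodseq (strip s) by move: Hv; rewrite good_F => /andP[].
  rewrite good_F strip_F Hs.
  rewrite tz_F g_F tz_F !size_rcons eqxx /=.
  have -> : (trailing_zeros s).+2 %% 3 == 1 = false by lia.
  have -> : (trailing_zeros s).+2 %% 3 == 0 = true by lia.
  by rewrite eqxx.
Qed.
Lemma rcons_neq0 (s : seq bool) x : (rcons s x == [::]) = false.
Proof. by case: s. Qed.

Lemma in_T u : goodseq u -> 0 < size u -> rcons u true \in f_seq u.
Proof.
case/lastP: u => [//|s []] Hg _.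
- rewrite f_seq_T; case: ifP => [_|HC]; first by rewrite inE eqxx.
  case: ifP => [_|HD]; first by rewrite inE eqxx.
  exfalso; have Ht := good_tz _ Hg; rewrite tz_T in Ht.
  move: Hg; rewrite good_T => Hg; have {}Ht := good_tz _ Hg.
  case/lastP: s HC HD Hg Ht => [//|s' []] HC HD _ Ht.
    by move: HC; rewrite size_rcons last_rcons /= !orbT.
  move: HC HD Ht; rewrite rcons_neq0 tz_F last_rcons andbF orbF /= => HC HD Ht.
  lia.
- rewrite f_seq_F; have Ht := good_tz _ Hg; rewrite tz_F in Ht.
  case: ifP => H0; first by rewrite inE eqxx.
  case: ifP => H2; first by rewrite !inE eqxx orbT.
  exfalso; lia.
Qed.

Lemma g_good w : goodseq w -> 1 < size w ->
  [&& goodseq (g w), w \in f_seq (g w) & size (g w) == (size w).-1].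
Proof.
case/lastP: w => [//|u []] Hg Hs.
- rewrite g_T; move: Hg; rewrite good_T => Hg.
  by rewrite Hg in_T ?size_rcons ?eqxx //; rewrite size_rcons in Hs.
- rewrite g_F; have Ht := good_tz _ Hg; rewrite tz_F in Ht.
  have Hsu : goodseq (strip u) by move: Hg; rewrite good_F => /andP[].
  case: ifP => H0.
    have h2 : trailing_zeros u %% 3 == 2 by lia.
    have h0 : 0 < trailing_zeros u by lia.
    rewrite good_dec Hsu size_rcons eqxx /= andbT.
    have -> : trailing_zeros u %% 3 == 1 = false by lia.
    by rewrite /f_seq /typeA /typeB h0 h2 /= (eqP h2) /= !inE eqxx.
  case/lastP: u Hg Hs Ht H0 Hsu => [|u' [] ] Hg Hs Ht H0 Hsu.
  + by [].
  + by move: Ht; rewrite tz_T.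
  rewrite init_rcons tz_F in Ht H0 *.
  rewrite strip_F in Hsu.
  rewrite good_T good_dec Hsu !size_rcons eqxx andbT /=.
  have -> : trailing_zeros u' %% 3 == 1 = false by lia.
  rewrite f_seq_T.
  have -> : rcons (rcons u' false) false = u' ++ [:: false; false] by rewrite -!cats1 -catA.
  have -> : (u' == [::]) || [&& 0 < trailing_zeros u' & trailing_zeros u' %% 3 == 0]
     || ((0 < size u') && last false u').
    case/lastP: u' Ht H0 {Hg Hs Hsu} => [//|s []] Ht H0.
      by rewrite size_rcons last_rcons !orbT.
    rewrite tz_F in Ht H0 *.
    have -> : (trailing_zeros s).+1 %% 3 == 0 = true by lia.
    by rewrite /= orbT.
  by rewrite /= !inE eqxx orbT.
Qed.
Theorem lemma1 (n : nat) (hn : 1 <= n) :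
  (forall v w : n.-tuple bool, v \in Sset n -> w \in Sset n -> v != w ->
     [disjoint f v & f w]) /\
  Sset n.+1 = \bigcup_(v in Sset n) f v /\
  #|Sset n.+1| = \sum_(v in Sset n) #|f v|.
Proof.
have Hdisj : forall v w : n.-tuple bool, v \in Sset n -> w \in Sset n -> v != w ->
     [disjoint f v & f w].
  move=> v w; rewrite !inE => Hv Hw Hvw; rewrite disjoint_subset.
  apply/subsetP => t Htv; rewrite inE; apply/negP => Htw; rewrite !inE in Htv Htw.
  case/and3P: (fseq_good _ _ Hv Htv) => _ _ /eqP E1.
  case/and3P: (fseq_good _ _ Hw Htw) => _ _ /eqP E2.
  by move/eqP: Hvw; apply; apply: val_inj; rewrite /= -E1 -E2.
pose v0 := [tuple of nseq n true].
pose p (t : n.+1.-tuple bool) : n.-tuple bool := insubd v0 (g t).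
have Hp : forall t : n.+1.-tuple bool, t \in Sset n.+1 ->
    [/\ p t \in Sset n, val (p t) = g t & t \in f (p t)].
  move=> t; rewrite inE => Ht.
  have Hs : 1 < size t by rewrite size_tuple ltnS.
  case/and3P: (g_good _ Ht Hs) => H1 H2 /eqP H3.
  have Hv : val (p t) = g t by rewrite /p val_insubd H3 size_tuple /= eqxx.
  by split; rewrite ?inE Hv.
have Hunion : Sset n.+1 = \bigcup_(v in Sset n) f v.
  apply/setP => t; apply/idP/bigcupP.
    by move=> Ht; case: (Hp t Ht) => H1 _ H3; exists (p t).
  case=> v; rewrite !inE => Hv Ht.
  by case/and3P: (fseq_good _ _ Hv Ht).
split=> //; split=> //.
rewrite -sum1_card (partition_big p (fun v => v \in Sset n)); last first.
  by move=> t Ht; case: (Hp t Ht).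
apply: eq_bigr => v Hv.
rewrite sum1_card; apply: eq_card => t; rewrite !inE.
apply/andP/idP.
  by case=> Ht /eqP <-; case: (Hp t Ht) => _ _; rewrite inE.
move=> Htv; move: (Hv); rewrite inE => Hv'.
case/and3P: (fseq_good _ _ Hv' Htv) => Hg _ /eqP Hgt.
split; first by rewrite inE.
apply/eqP; apply: val_inj => /=.
by rewrite /p val_insubd Hgt size_tuple eqxx.
Qed.
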